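(* For any $\Gamma\vdash t:A$ and $\Gamma\vdash u:A$ in the full simply-typed $\lambda$-calculus, if $t\approx_{ctx}u$ then $t\approx_{sem}u$.
   Context: Types: $A,B ::= X \mid A\to B \mid A_1\times A_2 \mid 1 \mid A_1+A_2 \mid 0$ ($X$ atomic). Terms: $x \mid \lambda x.t \mid t\,u \mid (t_1,t_2) \mid \pi_i t \mid () \mid \sigma_i t \mid \mathtt{match}\ t\ \mathtt{with}\ (\sigma_1 x_1\to u_1 \mid \sigma_2 x_2\to u_2) \mid \mathtt{absurd}(t)$ with standard simple typing; $\mathtt{absurd}(t):A$ for any $A$ when $t:0$. $\beta$-equivalence $\equiv_\beta$ is the congruence generated by $(\lambda x.t)u\equiv t[u/x]$, $\pi_i(t_1,t_2)\equiv t_i$, $\mathtt{match}\ \sigma_jt\ \mathtt{with}\ (\sigma_ix_i\to u_i)_i\equiv u_j[t/x_j]$. A closed type contains no atoms; a model $M$ maps atoms to closed types and $M(\cdot)$ substitutes. Contextual equivalence: $t\approx_{ctx}u$ iff for every model $M$ and every one-hole context $C$ with $\emptyset\vdash C[M(\Gamma)\vdash\square:M(A)]:1+1$, $C[M(t)]\equiv_\beta C[M(u)]$. Semantics: closed types denote sets ($[\![A\to B]\!]$ total functions, $[\![A\times B]\!]$ product, $[\![1]\!]=\{\star\}$, $[\![A+B]\!]=\{(1,a)\}\uplus\{(2,b)\}$, $[\![0]\!]=\emptyset$), $[\![A]\!]_M=[\![M(A)]\!]$, valuations $\rho\in[\![\Gamma]\!]_M$ map each $x:A\in\Gamma$ into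 $[\![A]\!]_M$, and $[\![t]\!]_M:[\![\Gamma]\!]_M\to[\![A]\!]_M$ is the standard set-theoretic interpretation. Semantic equivalence: $t\approx_{sem}u$ iff for all models $M$ and all $\rho\in[\![\Gamma]\!]_M$, $[\![t]\!]_M(\rho)=[\![u]\!]_M(\rho)$. *)

(* Defs.v *)
From Stdlib Require Import List.
Import ListNotations.
Set Implicit Arguments.

Inductive ty : Type :=
| tatom : nat -> ty
| tarr : ty -> ty -> ty
| tprod : ty -> ty -> ty
| tunit : ty
| tsum : ty -> ty -> ty
| tempty : ty.

Definition tctx := list ty.

Inductive var : tctx -> ty -> Type :=
| vz : forall G A, var (A :: G) A
| vs : forall G A B, var G A -> var (B :: G) A.

Inductive tm : tctx -> ty -> Type :=
| tvar : forall G A, var G A -> tm G A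
| tlam : forall G A B, tm (A :: G) B -> tm G (tarr A B)
| tapp : forall G A B, tm G (tarr A B) -> tm G A -> tm G B
| tpair : forall G A B, tm G A -> tm G B -> tm G (tprod A B)
| tproj1 : forall G A B, tm G (tprod A B) -> tm G A
| tproj2 : forall G A B, tm G (tprod A B) -> tm G B
| ttt : forall G, tm G tunit
| tinl : forall G A B, tm G A -> tm G (tsum A B)
| tinr : forall G A B, tm G B -> tm G (tsum A B)
| tcase : forall G A B C, tm G (tsum A B) -> tm (A :: G) C -> tm (B :: G) C -> tm G C
| tabsurd : forall G C, tm G tempty -> tm G C.

Definition rlift {G D B} (r : forall A, var G A -> var D A) : forall A, var (B :: G) A -> var (B :: D) A :=
  fun A v =>
    match v in var L A' return
      (match L with nil => unit | B' :: G' => (forall A, var G' A -> var D A) -> var (B' :: D) A' end)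
    with
    | @vz _ _ => fun _ => vz _ _
    | @vs _ _ _ v' => fun r => vs _ (r _ v')
    end r.

Fixpoint ren {G A} (t : tm G A) {struct t} : forall D, (forall B, var G B -> var D B) -> tm D A :=
  match t in tm G A return forall D, (forall B, var G B -> var D B) -> tm D A with
  | tvar v => fun D r => tvar (r _ v)
  | tlam t => fun D r => tlam (ren t (rlift r))
  | tapp t u => fun D r => tapp (ren t r) (ren u r)
  | tpair t u => fun D r => tpair (ren t r) (ren u r)
  | tproj1 t => fun D r => tproj1 (ren t r)
  | tproj2 t => fun D r => tproj2 (ren t r)
  | ttt _ => fun D r => ttt D
  | tinl _ t => fun D r => tinl _ (ren t r)
  | tinr _ t => fun D r => tinr _ (ren t r)
  | tcase s t1 t2 => fun D r => tcase (ren s r) (ren t1 (rlift r)) (ren t2 (rlift r))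
  | tabsurd _ s => fun D r => tabsurd _ (ren s r)
  end.

Definition wk {G A B} (t : tm G A) : tm (B :: G) A := ren t (fun _ v => vs B v).

Definition slift {G D B} (s : forall A, var G A -> tm D A) : forall A, var (B :: G) A -> tm (B :: D) A :=
  fun A v =>
    match v in var L A' return
      (match L with nil => unit | B' :: G' => (forall A, var G' A -> tm D A) -> tm (B' :: D) A' end)
    with
    | @vz _ _ => fun _ => tvar (vz _ _)
    | @vs _ _ _ v' => fun s => wk (s _ v')
    end s.

Fixpoint sub {G A} (t : tm G A) {struct t} : forall D, (forall B, var G B -> tm D B) -> tm D A :=
  match t in tm G A return forall D, (forall B, var G B -> tm D B) -> tm D A with
  | tvar v => fun D s => s _ v
  | tlam t => fun D s => tlam (sub t (slift s))
  | tapp t u => fun D s => tapp (sub t s) (sub u s)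
  | tpair t u => fun D s => tpair (sub t s) (sub u s)
  | tproj1 t => fun D s => tproj1 (sub t s)
  | tproj2 t => fun D s => tproj2 (sub t s)
  | ttt _ => fun D s => ttt D
  | tinl _ t => fun D s => tinl _ (sub t s)
  | tinr _ t => fun D s => tinr _ (sub t s)
  | tcase c t1 t2 => fun D s => tcase (sub c s) (sub t1 (slift s)) (sub t2 (slift s))
  | tabsurd _ c => fun D s => tabsurd _ (sub c s)
  end.

Definition subst1_sub {G B} (u : tm G B) : forall A, var (B :: G) A -> tm G A :=
  fun A v =>
    match v in var L A' return
      (match L with nil => unit | B' :: G' => tm G' B' -> tm G' A' end)
    with
    | @vz _ _ => fun u => u
    | @vs _ _ _ v' => fun _ => tvar v'
    end u.

Definition subst1 {G A B} (t : tm (B :: G) A) (u : tm G B) : tm G A :=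
  sub t (subst1_sub u).

Inductive beq : forall G A, tm G A -> tm G A -> Prop :=
| beq_refl : forall G A (t : tm G A), beq t t
| beq_sym : forall G A (t u : tm G A), beq t u -> beq u t
| beq_trans : forall G A (t u v : tm G A), beq t u -> beq u v -> beq t v
| beq_lam : forall G A B (t t' : tm (A :: G) B), beq t t' -> beq (tlam t) (tlam t')
| beq_app : forall G A B (t t' : tm G (tarr A B)) (u u' : tm G A),
    beq t t' -> beq u u' -> beq (tapp t u) (tapp t' u')
| beq_pair : forall G A B (t t' : tm G A) (u u' : tm G B),
    beq t t' -> beq u u' -> beq (tpair t u) (tpair t' u')
| beq_proj1 : forall G A B (t t' : tm G (tprod A B)), beq t t' -> beq (tproj1 t) (tproj1 t')
| beq_proj2 : forall G A B (t t' : tm G (tprod A B)), beq t t' -> beq (tproj2 t) (tproj2 t')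
| beq_inl : forall G A B (t t' : tm G A), beq t t' -> beq (tinl B t) (tinl B t')
| beq_inr : forall G A B (t t' : tm G B), beq t t' -> beq (tinr A t) (tinr A t')
| beq_case : forall G A B C (s s' : tm G (tsum A B)) (t1 t1' : tm (A :: G) C) (t2 t2' : tm (B :: G) C),
    beq s s' -> beq t1 t1' -> beq t2 t2' -> beq (tcase s t1 t2) (tcase s' t1' t2')
| beq_absurd : forall G C (s s' : tm G tempty), beq s s' -> beq (tabsurd C s) (tabsurd C s')
| beq_beta_lam : forall G A B (t : tm (A :: G) B) (u : tm G A),
    beq (tapp (tlam t) u) (subst1 t u)
| beq_beta_proj1 : forall G A B (t1 : tm G A) (t2 : tm G B), beq (tproj1 (tpair t1 t2)) t1
| beq_beta_proj2 : forall G A B (t1 : tm G A) (t2 : tm G B), beq (tproj2 (tpair t1 t2)) t2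
| beq_beta_inl : forall G A B C (t : tm G A) (u1 : tm (A :: G) C) (u2 : tm (B :: G) C),
    beq (tcase (tinl B t) u1 u2) (subst1 u1 t)
| beq_beta_inr : forall G A B C (t : tm G B) (u1 : tm (A :: G) C) (u2 : tm (B :: G) C),
    beq (tcase (tinr A t) u1 u2) (subst1 u2 t).

(* ---------- one-hole contexts C[H |- [] : K] : (D |- _ : B) ---------- *)
Inductive hctx (H : tctx) (K : ty) : tctx -> ty -> Type :=
| chole : hctx H K H K
| clam : forall G A B, hctx H K (A :: G) B -> hctx H K G (tarr A B)
| cappl : forall G A B, hctx H K G (tarr A B) -> tm G A -> hctx H K G B
| cappr : forall G A B, tm G (tarr A B) -> hctx H K G A -> hctx H K G B
| cpairl : forall G A B, hctx H K G A -> tm G B -> hctx H K G (tprod A B)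
| cpairr : forall G A B, tm G A -> hctx H K G B -> hctx H K G (tprod A B)
| cproj1 : forall G A B, hctx H K G (tprod A B) -> hctx H K G A
| cproj2 : forall G A B, hctx H K G (tprod A B) -> hctx H K G B
| cinl : forall G A B, hctx H K G A -> hctx H K G (tsum A B)
| cinr : forall G A B, hctx H K G B -> hctx H K G (tsum A B)
| ccase0 : forall G A B C, hctx H K G (tsum A B) -> tm (A :: G) C -> tm (B :: G) C -> hctx H K G C
| ccase1 : forall G A B C, tm G (tsum A B) -> hctx H K (A :: G) C -> tm (B :: G) C -> hctx H K G C
| ccase2 : forall G A B C, tm G (tsum A B) -> tm (A :: G) C -> hctx H K (B :: G) C -> hctx H K G C
| cabsurd : forall G C, hctx H K G tempty -> hctx H K G C.

Fixpoint plug {H K G A} (c : hctx H K G A) (t : tm H K) {struct c} : tm G A :=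
  match c in hctx _ _ G A return tm G A with
  | chole _ _ => t
  | clam c => tlam (plug c t)
  | cappl c u => tapp (plug c t) u
  | cappr u c => tapp u (plug c t)
  | cpairl c u => tpair (plug c t) u
  | cpairr u c => tpair u (plug c t)
  | cproj1 c => tproj1 (plug c t)
  | cproj2 c => tproj2 (plug c t)
  | cinl _ c => tinl _ (plug c t)
  | cinr _ c => tinr _ (plug c t)
  | ccase0 c u1 u2 => tcase (plug c t) u1 u2
  | ccase1 s c u2 => tcase s (plug c t) u2
  | ccase2 s u1 c => tcase s u1 (plug c t)
  | cabsurd _ c => tabsurd _ (plug c t)
  end.

Inductive cty : Type :=
| carr : cty -> cty -> cty
| cprod : cty -> cty -> cty
| cunit : cty
| csum : cty -> cty -> cty
| cempty : cty.

Fixpoint emb (c : cty) : ty :=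
  match c with
  | carr a b => tarr (emb a) (emb b)
  | cprod a b => tprod (emb a) (emb b)
  | cunit => tunit
  | csum a b => tsum (emb a) (emb b)
  | cempty => tempty
  end.

Definition model := nat -> cty.

Fixpoint tinst (M : model) (A : ty) : cty :=
  match A with
  | tatom n => M n
  | tarr A B => carr (tinst M A) (tinst M B)
  | tprod A B => cprod (tinst M A) (tinst M B)
  | tunit => cunit
  | tsum A B => csum (tinst M A) (tinst M B)
  | tempty => cempty
  end.

Definition mty (M : model) (A : ty) : ty := emb (tinst M A).

Fixpoint mvar (M : model) {G A} (v : var G A) : var (map (mty M) G) (mty M A) :=
  match v in var G A return var (map (mty M) G) (mty M A) with
  | vz G A => vz _ _
  | vs B v => vs _ (mvar M v)
  end.

Fixpoint mtm (M : model) {G A} (t : tm G A) : tm (map (mty M) G) (mty M A) :=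
  match t in tm G A return tm (map (mty M) G) (mty M A) with
  | tvar v => tvar (mvar M v)
  | tlam t => tlam (mtm M t)
  | tapp t u => tapp (mtm M t) (mtm M u)
  | tpair t u => tpair (mtm M t) (mtm M u)
  | tproj1 t => tproj1 (mtm M t)
  | tproj2 t => tproj2 (mtm M t)
  | ttt _ => ttt _
  | tinl _ t => tinl _ (mtm M t)
  | tinr _ t => tinr _ (mtm M t)
  | tcase s t1 t2 => tcase (mtm M s) (mtm M t1) (mtm M t2)
  | tabsurd _ s => tabsurd _ (mtm M s)
  end.

Definition tbool : ty := tsum tunit tunit.

Definition ctx_equiv {G A} (t u : tm G A) : Prop :=
  forall (M : model) (C : hctx (map (mty M) G) (mty M A) nil tbool),
    beq (plug C (mtm M t)) (plug C (mtm M u)).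

Fixpoint csem (c : cty) : Type :=
  match c with
  | carr a b => csem a -> csem b
  | cprod a b => (csem a * csem b)%type
  | cunit => unit
  | csum a b => (csem a + csem b)%type
  | cempty => Empty_set
  end.

Definition tsem (M : model) (A : ty) : Type := csem (tinst M A).

Definition valuation (M : model) (G : tctx) : Type := forall A, var G A -> tsem M A.

Definition vext {M G A} (rho : valuation M G) (x : tsem M A) : valuation M (A :: G) :=
  fun B v =>
    match v in var L B' return
      (match L with nil => unit | A' :: G' => tsem M A' -> valuation M G' -> tsem M B' end)
    with
    | @vz _ _ => fun x _ => x
    | @vs _ _ _ v' => fun _ rho => rho _ v'
    end x rho.

Fixpoint eval (M : model) {G A} (t : tm G A) {struct t} : valuation M G -> tsem M A :=
  match t in tm G A return valuation M G -> tsem M A with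
  | tvar v => fun rho => rho _ v
  | tlam t => fun rho => fun x => @eval M _ _ t (vext rho x)
  | tapp t u => fun rho => (@eval M _ _ t rho) (@eval M _ _ u rho)
  | tpair t u => fun rho => (@eval M _ _ t rho, @eval M _ _ u rho)
  | tproj1 t => fun rho => fst (@eval M _ _ t rho)
  | tproj2 t => fun rho => snd (@eval M _ _ t rho)
  | ttt _ => fun rho => tt
  | tinl _ t => fun rho => inl (@eval M _ _ t rho)
  | tinr _ t => fun rho => inr (@eval M _ _ t rho)
  | tcase s t1 t2 => fun rho =>
      match @eval M _ _ s rho with
      | inl a => @eval M _ _ t1 (vext rho a)
      | inr b => @eval M _ _ t2 (vext rho b)
      end
  | tabsurd C s => fun rho => match @eval M _ _ s rho return tsem M C with end
  end.

Arguments eval M {G A} t rho.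

Definition sem_equiv {G A} (t u : tm G A) : Prop :=
  forall (M : model) (rho : valuation M G), eval M t rho = eval M u rho.

(* Main.v *)
Require Import Defs.
From Stdlib Require Import List FunctionalExtensionality Classical ClassicalEpsilon.
From Stdlib Require Import Program.Equality.
Import ListNotations.

Definition M0 : model := fun _ => cunit.
Definition T (c : cty) : Type := csem (tinst M0 (emb c)).

Fixpoint fwd (c : cty) : T c -> csem c :=
  match c return T c -> csem c with
  | carr a b => fun f x => fwd b (f (bwd a x))
  | cprod a b => fun p => (fwd a (fst p), fwd b (snd p))
  | cunit => fun x => x
  | csum a b => fun s => match s with inl x => inl (fwd a x) | inr y => inr (fwd b y) end
  | cempty => fun x => x
  end
with bwd (c : cty) : csem c -> T c :=
  match c return csem c -> T c with
  | carr a b => fun f x => bwd b (f (fwd a x))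
  | cprod a b => fun p => (bwd a (fst p), bwd b (snd p))
  | cunit => fun x => x
  | csum a b => fun s => match s with inl x => inl (bwd a x) | inr y => inr (bwd b y) end
  | cempty => fun x => x
  end.

Lemma iso_inv c : (forall x, fwd c (bwd c x) = x) /\ (forall x, bwd c (fwd c x) = x).
Proof.
  induction c as [a [Ha1 Ha2] b [Hb1 Hb2]|a [Ha1 Ha2] b [Hb1 Hb2]| |a [Ha1 Ha2] b [Hb1 Hb2]|];
    split; simpl; intro x; auto.
  - apply functional_extensionality; intro y. rewrite Ha1, Hb1. reflexivity.
  - apply functional_extensionality; intro y. rewrite Ha2, Hb2. reflexivity.
  - rewrite Ha1, Hb1. destruct x; reflexivity.
  - rewrite Ha2, Hb2. destruct x; reflexivity.
  - destruct x; simpl; rewrite ?Ha1, ?Hb1; reflexivity.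
  - destruct x; simpl; rewrite ?Ha2, ?Hb2; reflexivity.
Qed.
Lemma fwd_bwd c x : fwd c (bwd c x) = x. Proof. apply iso_inv. Qed.
Lemma bwd_fwd c x : bwd c (fwd c x) = x. Proof. apply iso_inv. Qed.

Lemma eval_ext M G A (t : tm G A) (r1 r2 : valuation M G) :
  (forall B v, r1 B v = r2 B v) -> eval M t r1 = eval M t r2.
Proof.
  intro H. assert (r1 = r2) as ->; [|reflexivity].
  apply functional_extensionality_dep; intro B.
  apply functional_extensionality_dep; intro v. apply H.
Qed.

Lemma eval_mtm M G A (t : tm G A) : forall (rho : valuation M G)
  (rho' : valuation M0 (map (mty M) G)),
  (forall B (v : var G B), rho' _ (mvar M v) = bwd (tinst M B) (rho B v)) ->
  eval M0 (mtm M t) rho' = bwd (tinst M A) (eval M t rho).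
Proof.
  induction t; intros rho rho' Hr; cbn [mtm eval mvar].
  - apply Hr.
  - apply functional_extensionality; intro x. apply IHt.
    intros B0 v. dependent destruction v; simpl.
    + rewrite bwd_fwd. reflexivity.
    + apply Hr.
  - transitivity (bwd (tinst M (tarr A B)) (eval M t1 rho) (eval M0 (mtm M t2) rho')).
    + exact (f_equal (fun f : T (tinst M (tarr A B)) => f (eval M0 (mtm M t2) rho')) (IHt1 rho rho' Hr)).
    + simpl. rewrite (IHt2 rho rho' Hr). rewrite fwd_bwd. reflexivity.
  - rewrite (IHt1 rho rho' Hr), (IHt2 rho rho' Hr). reflexivity.
  - exact (f_equal (fun p : T (tinst M (tprod A B)) => fst p) (IHt rho rho' Hr)).
  - exact (f_equal (fun p : T (tinst M (tprod A B)) => snd p) (IHt rho rho' Hr)).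
  - reflexivity.
  - rewrite (IHt rho rho' Hr). reflexivity.
  - rewrite (IHt rho rho' Hr). reflexivity.
  - pose proof (IHt1 rho rho' Hr) as E.
    match goal with |- context [match ?e with inl _ => _ | inr _ => _ end] =>
      replace e with (bwd (tinst M (tsum A B)) (eval M t1 rho)) by (symmetry; exact E) end.
    simpl. destruct (eval M t1 rho) as [x|x]; simpl.
    + apply IHt2. intros B0 v. dependent destruction v; simpl; auto.
    + apply IHt3. intros B0 v. dependent destruction v; simpl; auto.
  - destruct (eval M t rho).
Qed.
Lemma eval_ren M G A (t : tm G A) : forall D (r : forall B, var G B -> var D B) (rho : valuation M D),
  eval M (ren t r) rho = eval M t (fun B v => rho B (r B v)).
Proof.
  induction t; intros D r rho; simpl; try reflexivity;
  try (rewrite ?IHt, ?IHt1, ?IHt2; reflexivity).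
  - apply functional_extensionality; intro x. rewrite IHt.
    apply eval_ext. intros B0 v. dependent destruction v; reflexivity.
  - rewrite IHt1. destruct (eval M t1 _).
    + rewrite IHt2. apply eval_ext. intros B0 v. dependent destruction v; reflexivity.
    + rewrite IHt3. apply eval_ext. intros B0 v. dependent destruction v; reflexivity.
Qed.

Lemma eval_sub M G A (t : tm G A) : forall D (s : forall B, var G B -> tm D B) (rho : valuation M D),
  eval M (sub t s) rho = eval M t (fun B v => eval M (s B v) rho).
Proof.
  induction t; intros D s rho; simpl; try reflexivity;
  try (rewrite ?IHt, ?IHt1, ?IHt2; reflexivity).
  - apply functional_extensionality; intro x. rewrite IHt.
    apply eval_ext. intros B0 v. dependent destruction v; simpl; [reflexivity|].
    unfold wk. rewrite eval_ren. apply eval_ext. reflexivity.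
  - rewrite IHt1. destruct (eval M t1 _).
    + rewrite IHt2. apply eval_ext. intros B0 v. dependent destruction v; simpl; [reflexivity|].
      unfold wk. rewrite eval_ren. apply eval_ext. reflexivity.
    + rewrite IHt3. apply eval_ext. intros B0 v. dependent destruction v; simpl; [reflexivity|].
      unfold wk. rewrite eval_ren. apply eval_ext. reflexivity.
Qed.

Lemma eval_subst1 M G A B (t : tm (B :: G) A) (u : tm G B) rho :
  eval M (subst1 t u) rho = eval M t (vext rho (eval M u rho)).
Proof.
  unfold subst1. rewrite eval_sub. apply eval_ext. intros C v.
  dependent destruction v; reflexivity.
Qed.

Lemma beq_sound G A (t u : tm G A) : beq t u -> forall M rho, eval M t rho = eval M u rho.
Proof.
  induction 1; intros M rho; simpl;
  try (rewrite ?eval_subst1; congruence).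
  - apply functional_extensionality; intro x. apply IHbeq.
  - rewrite IHbeq1. destruct (eval M s' rho); auto.
  - destruct (eval M s rho).
Qed.
Lemma fin_fun {X Y : Type} (la : list X) (lb : list Y) : (forall y, In y lb) ->
  exists lf : list (X -> Y), forall f, exists g, In g lf /\ forall x, In x la -> g x = f x.
Proof.
  intro Hb. induction la as [|a la IH].
  - destruct (classic (inhabited (X -> Y))) as [[f0]|n].
    + exists [f0]. intro f. exists f0. split; [left; reflexivity| intros x []].
    + exists []. intro f. exfalso. apply n. constructor. exact f.
  - destruct IH as [lf Hlf].
    exists (flat_map (fun g => map (fun b => fun x => if excluded_middle_informative (x = a) then b else g x) lb) lf).
    intro f. destruct (Hlf f) as [g [Hg Hgf]].
    exists (fun x => if excluded_middle_informative (x = a) then f a else g x). split.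
    + apply in_flat_map. exists g. split; auto. apply in_map_iff. exists (f a); split; auto.
    + intros x Hx. destruct (excluded_middle_informative (x = a)) as [->|n]; auto.
      destruct Hx as [<-|Hx]; [congruence|auto].
Qed.

Lemma fin c : exists l : list (csem c), forall x, In x l.
Proof.
  induction c as [a [la Ha] b [lb Hb]|a [la Ha] b [lb Hb]| |a [la Ha] b [lb Hb]|].
  - destruct (fin_fun la lb Hb) as [lf Hlf]. exists lf. intro f.
    destruct (Hlf f) as [g [Hg Hgf]].
    replace f with g; auto. apply functional_extensionality; intro x; auto.
  - exists (list_prod la lb). intros [x y]. apply in_prod; auto.
  - exists [tt]. intros []. left; reflexivity.
  - exists (map inl la ++ map inr lb). intros [x|y]; apply in_app_iff; [left|right]; apply in_map; auto.
  - exists []. intros [].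
Qed.

Definition ttrue G : tm G tbool := tinl tunit (ttt G).
Definition tfalse G : tm G tbool := tinr tunit (ttt G).

Definition Def c := forall (x : csem c) G, exists d : tm G (emb c),
  forall rho : valuation M0 G, eval M0 d rho = bwd c x.
Definition Test c := forall (x : csem c) G, exists e : tm G (tarr (emb c) tbool),
  forall (rho : valuation M0 G) (y : T c), eval M0 e rho y = inl tt <-> fwd c y = x.
Definition Elim c := (csem c -> False) -> forall G, tm G (emb c) -> inhabited (tm G tempty).

Lemma definability c : Def c /\ Test c /\ Elim c.
Proof.
  induction c as [a [Da [Ta Ea]] b [Db [Tb Eb]]|a [Da [Ta Ea]] b [Db [Tb Eb]]| |a [Da [Ta Ea]] b [Db [Tb Eb]]|];
    split; [|split| |split| |split| |split| |split].
  - intros f G. destruct (fin a) as [la Hla].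
    assert (D : forall l D (v : var D (emb a)) e0, exists d : tm D (emb b),
      forall rho : valuation M0 D, In (fwd a (rho _ v)) (e0 :: l) ->
        eval M0 d rho = bwd b (f (fwd a (rho _ v)))).
    { induction l as [|e1 l IH]; intros D v e0.
      - destruct (Db (f e0) D) as [d H]. exists d. intros rho [E|[]].
        rewrite <- E. apply H.
      - destruct (Ta e0 D) as [t0 Ht0]. destruct (Db (f e0) (tunit :: D)) as [d0 Hd0].
        destruct (IH (tunit :: D) (vs tunit v) e1) as [d1 Hd1].
        exists (tcase (tapp t0 (tvar v)) d0 d1). intros rho Hin. simpl.
        pose proof (Ht0 rho (rho _ v)) as K.
        match goal with |- context [match ?s with inl _ => _ | inr _ => _ end] => destruct s as [[]|[]] eqn:E end.
        + assert (h : fwd a (rho _ v) = e0) by (apply K; first [exact E|reflexivity]).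
          rewrite Hd0. rewrite h. reflexivity.
        + assert (h : fwd a (rho _ v) <> e0).
          { intro h. apply K in h. first [discriminate h|discriminate (eq_trans (eq_sym h) E)]. }
          assert (h' : In (fwd a (rho _ v)) (e1 :: l)).
          { destruct Hin as [h2|h2]; [congruence|exact h2]. }
          exact (Hd1 (@vext M0 D tunit rho tt) h'). }
    destruct la as [|e0 l].
    + assert (na : csem a -> False) by (intro x; exact (Hla x)).
      destruct (Ea na (emb a :: G) (tvar (vz _ _))) as [z].
      exists (tlam (tabsurd _ z)). intro rho. apply functional_extensionality; intro x.
      exfalso; exact (na (fwd a x)).
    + destruct (D l (emb a :: G) (vz _ _) e0) as [d Hd]. exists (tlam d). intro rho.
      apply functional_extensionality; intro x. simpl.
      exact (Hd (vext rho x) (Hla _)).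
  - intros f G. destruct (fin a) as [la Hla].
    assert (TT : forall l D (v : var D (emb (carr a b))), exists e : tm D tbool,
      forall rho : valuation M0 D, eval M0 e rho = inl tt <->
        (forall x, In x l -> fwd b ((rho _ v) (bwd a x)) = f x)).
    { induction l as [|e0 l IH]; intros D v.
      - exists (ttrue D). intros rho. split; [intros _ x []|reflexivity].
      - destruct (Tb (f e0) D) as [tb Htb]. destruct (Da e0 D) as [da Hda].
        destruct (IH (tunit :: D) (vs tunit v)) as [e' He'].
        exists (tcase (tapp tb (tapp (tvar v) da)) e' (tfalse _)). intros rho. simpl.
        pose proof (Htb rho ((rho _ v) (eval M0 da rho))) as K.
        pose proof (He' (@vext M0 D tunit rho tt)) as K'. simpl in K'.
        match goal with |- context [match ?s with inl _ => _ | inr _ => _ end] => destruct s as [[]|[]] eqn:E end.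
        + assert (h0 : fwd b (rho _ v (bwd a e0)) = f e0).
          { rewrite <- (Hda rho). apply K. first [exact E|reflexivity]. }
          split.
          * intros h x [<-|hx]; [exact h0|]. apply K'; auto.
          * intro h. apply K'. intros x hx. apply h. right; exact hx.
        + split; [discriminate|]. intro h. exfalso.
          assert (h0 : fwd b (rho _ v (eval M0 da rho)) = f e0).
          { rewrite (Hda rho). apply h. left; reflexivity. }
          apply K in h0. first [discriminate h0|discriminate (eq_trans (eq_sym h0) E)]. }
    destruct (TT la (emb (carr a b) :: G) (vz _ _)) as [e He].
    exists (tlam e). intros rho y. simpl. split; intro h.
    + pose proof (proj1 (He (vext rho y)) h) as h'. simpl in h'.
      apply functional_extensionality; intro x. apply h', Hla.
    + apply (He (vext rho y)). intros x _. rewrite <- h. reflexivity.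
  - intros Hn G y.
    destruct (classic (exists x : csem a, True)) as [[x0 _]|nx].
    + assert (nb : csem b -> False) by (intro yb; apply Hn; exact (fun _ => yb)).
      destruct (Da x0 G) as [d _]. destruct (Eb nb G (tapp y d)) as [z]. constructor; exact z.
    + exfalso. apply Hn. intro x. exfalso. apply nx. exists x; auto.
  - intros [x1 x2] G. destruct (Da x1 G) as [d1 H1], (Db x2 G) as [d2 H2].
    exists (tpair d1 d2). intros rho. simpl. rewrite H1, H2. reflexivity.
  - intros [x1 x2] G.
    set (P := tprod (emb a) (emb b)).
    destruct (Ta x1 (P :: G)) as [e1 H1]. destruct (Tb x2 (tunit :: P :: G)) as [e2 H2].
    exists (tlam (tcase (tapp e1 (tproj1 (tvar (vz G P)))) (tapp e2 (tproj2 (tvar (vs tunit (vz G P))))) (tfalse _))).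
    intros rho y. simpl.
    pose proof (H1 (vext rho y) (fst y)) as K1.
    pose proof (H2 (@vext M0 (P :: G) tunit (vext rho y) tt) (snd y)) as K2.
    match goal with |- context [match ?s with inl _ => _ | inr _ => _ end] => destruct s as [[]|[]] eqn:E end.
    + assert (h1 : fwd a (fst y) = x1) by (apply K1; exact E).
      split.
      * intro h. f_equal; auto. apply K2. exact h.
      * intro h. injection h. intros h2 _. apply K2. exact h2.
    + split; [discriminate|]. intro h. injection h. intros _ h1.
      pose proof (proj2 K1 h1) as h1'. exfalso. discriminate (eq_trans (eq_sym h1') E).
  - intros Hn G y.
    destruct (classic (exists x : csem a, True)) as [[x0 _]|nx].
    + assert (nb : csem b -> False) by (intro yb; apply Hn; exact (x0, yb)).
      destruct (Eb nb G (tproj2 y)) as [z]. constructor; exact z.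
    + assert (na : csem a -> False) by (intro x; apply nx; exists x; auto).
      destruct (Ea na G (tproj1 y)) as [z]. constructor; exact z.
  - intros x G. exists (ttt G). intros rho. destruct x; reflexivity.
  - intros x G. exists (tlam (ttrue _)). intros rho y. simpl. destruct x, y; split; auto.
  - intros H. exfalso. apply H. exact tt.
  - intros [x1|x2] G.
    + destruct (Da x1 G) as [d H]. exists (tinl _ d). intros rho. simpl. rewrite H. reflexivity.
    + destruct (Db x2 G) as [d H]. exists (tinr _ d). intros rho. simpl. rewrite H. reflexivity.
  - set (S := tsum (emb a) (emb b)). intros [x1|x2] G.
    + destruct (Ta x1 (emb a :: S :: G)) as [e1 H1].
      exists (tlam (tcase (tvar (vz G S)) (tapp e1 (tvar (vz (S :: G) (emb a)))) (tfalse _))).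
      intros rho [y1|y2]; simpl.
      * pose proof (H1 (vext (@vext M0 G S rho (inl y1)) y1) y1) as K.
        split; intro h.
        -- f_equal. apply K. exact h.
        -- apply K. injection h. auto.
      * split; discriminate.
    + destruct (Tb x2 (emb b :: S :: G)) as [e1 H1].
      exists (tlam (tcase (tvar (vz G S)) (tfalse _) (tapp e1 (tvar (vz (S :: G) (emb b)))))).
      intros rho [y1|y2]; simpl.
      * split; discriminate.
      * pose proof (H1 (vext (@vext M0 G S rho (inr y2)) y2) y2) as K.
        split; intro h.
        -- f_equal. apply K. exact h.
        -- apply K. injection h. auto.
  - intros Hn G y.
    assert (na : csem a -> False) by (intro x; apply Hn; left; exact x).
    assert (nb : csem b -> False) by (intro x; apply Hn; right; exact x).
    destruct (Ea na (emb a :: G) (tvar (vz _ _))) as [z1].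
    destruct (Eb nb (emb b :: G) (tvar (vz _ _))) as [z2].
    constructor. exact (tcase y z1 z2).
  - intros [].
  - intros [].
  - intros _ G y. constructor. exact y.
Qed.

Lemma var_nil_empty {B} (v : var nil B) : False.
Proof. inversion v. Qed.

Lemma close M G : forall (H : tctx) (K : ty) (c : hctx H K (map (mty M) G) tbool) (rho : valuation M G),
  exists c' : hctx H K nil tbool, forall rho0 : valuation M0 nil,
  exists rho' : valuation M0 (map (mty M) G),
    (forall B (v : var G B), rho' _ (mvar M v) = bwd (tinst M B) (rho B v)) /\
    forall t : tm H K, eval M0 (plug c' t) rho0 = eval M0 (plug c t) rho'.
Proof.
  induction G as [|A G IH]; intros H K c rho.
  - exists c. intros rho0. exists rho0. split; [intros B v; exfalso; exact (var_nil_empty v)|reflexivity].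
  - destruct (proj1 (definability (tinst M A)) (rho A (vz G A)) (map (mty M) G)) as [d Hd].
    destruct (IH H K (cappl (clam c) d) (fun B v => rho B (vs A v))) as [c' Hc'].
    exists c'. intros rho0. destruct (Hc' rho0) as [rho1 [Hr1 He1]].
    exists (@vext M0 (map (mty M) G) (mty M A) rho1 (eval M0 d rho1)). split.
    + intros B v. dependent destruction v; simpl.
      * apply Hd.
      * apply Hr1.
    + intro t. rewrite He1. reflexivity.
Qed.

Theorem mainTheorem6 (G : tctx) (A : ty) (t u : tm G A) :
  ctx_equiv t u -> sem_equiv t u.
Proof.
  intros Hc M rho.
  destruct (proj1 (proj2 (definability (tinst M A))) (eval M t rho) (map (mty M) G)) as [e He].
  destruct (close M G _ _ (cappr e (chole (map (mty M) G) (mty M A))) rho) as [C HC].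
  set (rho0 := (fun B (v : var nil B) => False_rect (tsem M0 B) (var_nil_empty v)) : valuation M0 nil).
  destruct (HC rho0) as [rho' [Hr' Heq]].
  pose proof (beq_sound _ _ _ _ (Hc M C) M0 rho0) as S.
  rewrite !Heq in S. simpl in S.
  set (f := (fun y => eval M0 e rho' y) : T (tinst M A) -> (unit + unit)%type).
  assert (S2 : f (bwd (tinst M A) (eval M t rho)) = f (bwd (tinst M A) (eval M u rho))).
  { rewrite <- (eval_mtm M G A t rho rho' Hr'), <- (eval_mtm M G A u rho rho' Hr'). exact S. }
  clear S. rename S2 into S. unfold f in S.
  assert (Ht : eval M0 e rho' (bwd (tinst M A) (eval M t rho)) = inl tt).
  { apply He. apply fwd_bwd. }
  rewrite Ht in S.
  symmetry in S. apply He in S. rewrite fwd_bwd in S. symmetry; exact S.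
Qed.
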